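(* Let $\eta>0$, $T>0$, and let $N$ be a standard Gaussian random variable. Let $\beta\in[0,+\infty]$, $\theta>0$, $v>0$, and let $f$ be a measurable function which is bounded from below on $[0,\beta]$. Let $u$ be any real number if $\beta=+\infty$, and $u=-v\beta$ if $\beta<+\infty$. Write $\omega=W(\theta v\eta^2T)$, where $W$ is the Lambert function, and suppose that $$\frac{\omega}{\eta^{2}T}+\frac{\omega^2}{2\eta^{2}T}\leq \theta v\beta .$$ Define $$L_{f,\beta}(\theta)=\mathbb{E}\left(\exp\left(-\theta f\left(e^{\eta\sqrt{T}N}\right)1_{e^{\eta\sqrt{T}N}\leq\beta}\right)\right).$$ Then $L_{f,\beta}(\theta)=L_\beta(\theta)\,I_{f,\beta}(\theta)$, where $$L_\beta(\theta)=\exp\left(-\left(\theta u+\frac{\omega}{\eta^{2}T}+\frac{\omega^2}{2\eta^{2}T}\right)\right),$$ $$I_{f,\beta}(\theta)=\mathbb{E}\left(\exp\left[-\theta\left(f\left(\frac{\omega}{\theta v\eta^2T}e^{\eta\sqrt{T}N}\right)-u-\frac{\omega}{\theta\eta^2T}e^{\eta\sqrt{T}N}\right)1_{N\leq \frac{\ln\beta}{\eta\sqrt{T}}+\frac{\omega}{\eta\sqrt{T}}}\right]\phi_\beta(N,\theta)\right),$$ $$\phi_\beta(y,\theta)=\exp\left(-\frac{\omega}{\eta^2T}\left(e^{\eta\sqrt{T}y}-1-\eta\sqrt{T}y\right)\right)\exp\left(\left(\frac{\omega}{\eta^2T}e^{\eta\sqrt{T}y}-\theta v\beta\right)_+\right),$$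 with the conventions $\ln(+\infty)=+\infty$, $\ln 0=-\infty$ and $(-\infty)_+=0$.
   Context: The Lambert function $W:(-1/e,+\infty)\to(-1,+\infty)$ is the inverse of the strictly increasing bijection $x\in(-1,+\infty)\mapsto xe^x\in(-1/e,+\infty)$. For real $x$, $x_+=\max(x,0)$. When $\beta=+\infty$, the indicator $1_{e^{\eta\sqrt T N}\le\beta}$ is identically $1$ and the hypothesis inequality holds trivially. *)

(* Defs.v *)
From HB Require Import structures.
From mathcomp Require Import all_boot all_order all_algebra.
From mathcomp Require Import all_classical all_reals all_analysis.
Set Implicit Arguments. Unset Strict Implicit. Unset Printing Implicit Defensive.
Import Order.TTheory GRing.Theory Num.Theory.
Local Open Scope classical_set_scope.
Local Open Scope ring_scope.

(* Lambert function W : (-1/e, +oo) -> (-1, +oo), inverse of x |-> x e^x on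
   (-1, +oo).  For y outside (-1/e,+oo) the value is an unspecified default. *)
Definition LambertW (R : realType) (y : R) : R :=
  xget 0 [set x : R | -1 < x /\ x * expR x = y].

(* Main.v *)
Require Import Defs.
Set Warnings "-notation-overridden,-ambiguous-paths,-notation-incompatible-prefix,-deprecated".
From HB Require Import structures.
From mathcomp Require Import all_boot all_order all_algebra.
From mathcomp Require Import all_classical all_reals all_analysis.
From mathcomp Require Import measurable_realfun ring lra.
Import Order.TTheory GRing.Theory Num.Theory.
Import numFieldNormedType.Exports.
Local Open Scope classical_set_scope.
Local Open Scope ring_scope.

Section S.
Context {R : realType}.
Local Notation mu := (@lebesgue_measure R).
Local Open Scope ereal_scope.

Lemma lebesgue_measure_shift (c : R) (A : set R) : measurable A ->
  pushforward mu ((fun y : R => (y - c)%R) : R -> measurableTypeR R) A = mu A.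
Proof.
have mf : measurable_fun [set: R] ((fun y : R => (y - c)%R) : R -> measurableTypeR R).
  exact: measurable_funB.
move=> mA; apply: esym; apply: (lebesgue_measure_unique (mu := pushforward mu _)) => //.
move=> /= _ [[a b]] _ <-.
rewrite /pushforward.
rewrite (_ : _ @^-1` _ = `](a + c)%R, (b + c)%R]%classic); last first.
  apply/seteqP; split => x /=; rewrite !in_itv/=.
  - by move=> /andP[h1 h2]; apply/andP; split; lra.
  - by move=> /andP[h1 h2]; apply/andP; split; lra.
rewrite !lebesgue_measure_itv/= !lte_fin ltrD2r; case: ifPn => // _.
by rewrite -!EFinD; congr EFin; ring.
Qed.

Lemma ge0_integral_shift (c : R) (k : R -> \bar R) :
  measurable_fun setT k -> (forall x, 0 <= k x) ->
  \int[mu]_x k (x - c)%R = \int[mu]_x k x.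
Proof.
move=> mk k0.
have mf : measurable_fun [set: R] ((fun y : R => (y - c)%R) : R -> measurableTypeR R).
  exact: measurable_funB.
transitivity (\int[pushforward mu ((fun y : R => (y - c)%R) : R -> measurableTypeR R)]_x k x).
  by rewrite ge0_integral_pushforward.
apply: eq_measure_integral => A mA _.
exact: lebesgue_measure_shift.
Qed.

Local Notation p := (@normal_pdf R 0 1).
Local Notation nu := (@normal_prob R 0 1).

Let p0 x : (0 <= (p x)%:E). Proof. by rewrite lee_fin normal_pdf_ge0. Qed.
Let mp : measurable_fun setT (fun x => (p x)%:E).
Proof. by apply/measurable_EFinP; exact: measurable_normal_pdf. Qed.

Let integral_normal_indic E : measurable E ->
  \int[nu]_x (\1_E x)%:E = \int[mu]_x ((\1_E x)%:E * (p x)%:E).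
Proof.
move=> mE; rewrite integral_indic//= /normal_prob setIT.
rewrite [LHS]integral_mkcond/=; apply: eq_integral => x _.
rewrite patchE indicE; case: ifPn => xE; first by rewrite mul1e.
by rewrite mul0e.
Qed.

Import HBNNSimple.

Let integral_normal_nnsfun (f : {nnsfun _ >-> R}) :
  \int[nu]_x (f x)%:E = \int[mu]_x ((f x)%:E * (p x)%:E).
Proof.
under [LHS]eq_integral do rewrite fimfunE -fsumEFin//.
rewrite [LHS]ge0_integral_fsum//; last 2 first.
  - by move=> r; exact/measurable_EFinP/measurableT_comp.
  - by move=> n x _; rewrite EFinM nnfun_muleindic_ge0.
under [RHS]eq_integral.
  move=> x xD; rewrite fimfunE -fsumEFin// ge0_mule_fsuml; last first.
    by move=> r; rewrite EFinM nnfun_muleindic_ge0.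
  over.
rewrite [RHS]ge0_integral_fsum//; last 2 first.
  - move=> r; apply: emeasurable_funM => //.
    by apply/measurable_EFinP; do 2 apply/measurableT_comp => //.
  - move=> n x _; rewrite mule_ge0//.
    by rewrite EFinM nnfun_muleindic_ge0.
apply: eq_fsbigr => _ /[!inE] -[t _ <-].
have r0 : (0 <= (f t)%:E) by rewrite lee_fin.
under eq_integral do rewrite EFinM.
rewrite ge0_integralZl//; try by [move=> u _; rewrite lee_fin | exact/measurable_EFinP/measurableT_comp].
rewrite integral_normal_indic//.
under [RHS]eq_integral do rewrite EFinM -muleA.
rewrite ge0_integralZl//; try by [move=> u _; rewrite mule_ge0// lee_fin |
  apply: emeasurable_funM => //; exact/measurable_EFinP/measurableT_comp].
all: have mS : measurable (f @^-1` [set f t]) by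
  rewrite -[X in measurable X]setTI; exact: (measurable_funP f).
all: try (apply: emeasurable_funM => //; apply/measurable_EFinP; exact: measurable_indic).
all: by apply/measurable_EFinP; exact: measurable_indic.
Qed.

Lemma integral_normal01 (h : measurableTypeR R -> \bar R) :
  measurable_fun [set: measurableTypeR R] h -> (forall x, 0 <= h x) ->
  \int[nu]_x h x = \int[mu]_x (h x * (p x)%:E).
Proof.
move=> mf f0.
pose f_ := nnsfun_approx measurableT mf.
have cvf x : (EFin \o f_^~ x) @ \oo --> h x.
  by apply: cvg_nnsfun_approx => // y _; exact: f0.
have ndf x : {homo (fun n => (f_ n x)%:E) : n m / (n <= m)%N >-> n <= m}.
  by move=> a b ab; rewrite lee_fin; exact/lefP/nd_nnsfun_approx.
transitivity (limn (fun n => \int[nu]_x (f_ n x)%:E)).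
  rewrite -monotone_convergence//=.
  + by apply: eq_integral => x _; symmetry; apply: cvg_lim => //; exact: cvf.
  + by move=> n; apply/measurable_EFinP; exact: (@measurable_funP _ _ _ _ setT (f_ n)).
  + by move=> n ? _; rewrite lee_fin.
transitivity (limn (fun n => \int[mu]_x ((f_ n x)%:E * (p x)%:E))).
  by congr (lim (_ @ \oo)); apply/funext => n /=; exact: integral_normal_nnsfun.
rewrite -monotone_convergence//=.
- apply: eq_integral => x _.
  apply/cvg_lim => //=.
  by apply: cvgeZr => //; exact: cvf.
- move=> n; apply: emeasurable_funM => //.
  apply/measurable_EFinP; exact: (@measurable_funP _ _ _ _ setT (f_ n)).
- by move=> n x _; rewrite mule_ge0// lee_fin.
- move=> x _ a b ab; apply: lee_wpmul2r => //.
  exact: ndf.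
Qed.
End S.

Lemma LambertW_spec (R : realType) (y : R) : 0 < y ->
  -1 < LambertW y /\ LambertW y * expR (LambertW y) = y.
Proof.
move=> y0; apply: (@xgetPex _ 0 [set x : R | -1 < x /\ x * expR x = y]).
pose g := fun x : R => x * expR x.
have cg : {within `[0, y], continuous g}.
  have cont : continuous g.
    move=> x; apply: cvgM; [exact: cvg_id | exact: continuous_expR].
  exact: continuous_subspaceT.
have [x x0y hx] : exists2 c, c \in `[0, y] & g c = y.
  apply: (IVT (ltW y0) cg).
  rewrite /g mul0r; apply/andP; split.
    by rewrite ge_min ltW.
  rewrite le_max; apply/orP; right.
  by rewrite ler_peMr ?ltW//; have := expR_ge1Dx y; lra.
exists x; split => //.
move: x0y; rewrite in_itv/= => /andP[x0 _]; lra.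
Qed.

Theorem theorem1 (R : realType) (d : measure_display) (Omega : measurableType d)
  (P : probability Omega R) (N : {RV P >-> R})
  (eta T theta v u : R) (beta : \bar R) (f : R -> R)
  (heta : 0 < eta) (hT : 0 < T)
  (hN : forall A : set R, measurable A -> distribution P N A = normal_prob 0 1 A)
  (hbeta : (0 <= beta)%E) (htheta : 0 < theta) (hv : 0 < v)
  (hf : measurable_fun setT f)
  (hfb : exists M : R, forall x : R, 0 <= x -> (x%:E <= beta)%E -> M <= f x)
  (hu : forall b : R, beta = b%:E -> u = - (v * b))
  (hineq : let omega := LambertW (theta * v * eta ^+ 2 * T) in
           ((omega / (eta ^+ 2 * T) + omega ^+ 2 / (2 * (eta ^+ 2 * T)))%:E
             <= theta%:E * v%:E * beta)%E) :
  let omega := LambertW (theta * v * eta ^+ 2 * T) in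
  let s := eta * Num.sqrt T in
  let phi := fun y : R =>
    expR (- (omega / (eta ^+ 2 * T) * (expR (s * y) - 1 - s * y)))
    * expR (fine (maxe ((omega / (eta ^+ 2 * T) * expR (s * y))%:E
                         - theta%:E * v%:E * beta)%E 0%E)) in
  let L_f := (\int[P]_w
      (expR (- theta * f (expR (s * N w))
               * ((expR (s * N w))%:E <= beta)%E%:R))%:E)%E in
  let L := expR (- (theta * u + omega / (eta ^+ 2 * T)
                    + omega ^+ 2 / (2 * (eta ^+ 2 * T)))) in
  let I := (\int[P]_w
      (expR (- theta * (f (omega / (theta * v * eta ^+ 2 * T) * expR (s * N w))
                         - u - omega / (theta * eta ^+ 2 * T) * expR (s * N w))
               * ((N w)%:E <= lne beta * (s^-1)%:E + (omega / s)%:E)%E%:R)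
       * phi (N w))%:E)%E in
  L_f = (L%:E * I)%E.
Proof.
move=> omega s phi L_f L I.
have y0 : 0 < theta * v * eta ^+ 2 * T by rewrite !mulr_gt0 // exprn_gt0.
have [_ hw] := @LambertW_spec R _ y0.
rewrite -/omega in hw.
have hs : s = eta * Num.sqrt T by [].
set c := omega / s.
pose F := fun x : R => expR (- theta * f (expR (s * x)) * ((expR (s * x))%:E <= beta)%E%:R).
pose G := fun y : R => expR (- theta * (f (omega / (theta * v * eta ^+ 2 * T) * expR (s * y))
                         - u - omega / (theta * eta ^+ 2 * T) * expR (s * y))
               * ((y)%:E <= lne beta * (s^-1)%:E + (omega / s)%:E)%E%:R)
       * phi y.
pose p := @normal_pdf R 0 1.
have L0 : 0 < L by rewrite /L expR_gt0.
have s0 : 0 < s by rewrite hs mulr_gt0 // sqrtr_gt0.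
have s2 : s ^+ 2 = eta ^+ 2 * T by rewrite hs exprMn sqr_sqrtr // ltW.
have om0 : omega != 0.
  apply/eqP => h0; move: hw; rewrite h0 mul0r => h; move: y0; rewrite -h ltxx.
  by [].
have Kw : omega / (eta ^+ 2 * T) * expR omega = theta * v.
  by rewrite mulrAC hw; field; rewrite !gt_eqF.
have harg : forall y, expR (s * (y - c)) = omega / (theta * v * eta ^+ 2 * T) * expR (s * y).
  move=> y; rewrite -hw (_ : s * (y - c) = s * y - omega); last first.
    by rewrite /c; field; rewrite gt_eqF.
  by rewrite expRD expRN; field; rewrite om0 gt_eqF ?expR_gt0.
have hbc : forall x : \bar R, (0 <= x)%E -> (exists b, x = b%:E) \/ x = +oo%E.
  by case=> [b| |] // _; [left; exists b | right].
have {}hbc := hbc _ hbeta.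
have hind : forall y, ((y%:E <= lne beta * (s^-1)%:E + (omega / s)%:E)%E)
    = ((expR (s * (y - c)))%:E <= beta)%E.
  move=> y; case: hbc => [[b hb]|hb]; rewrite hb; last first.
    by rewrite /= gt0_mulye ?lte_fin ?invr_gt0 // addye // !leey.
  have b0 : 0 <= b by move: hbeta; rewrite hb lee_fin.
  have [->|bp] := eqVneq b 0.
    rewrite le0_lneNy // gt0_mulNye ?lte_fin ?invr_gt0 // addNye leeNy_eq.
    by rewrite lee_fin (leNgt _ 0) expR_gt0.
  have bp' : 0 < b by rewrite lt_def bp.
  rewrite lne_EFin // -EFinM -EFinD !lee_fin.
  rewrite -{2}(lnK bp') ler_expR.
  rewrite -mulrDl ler_pdivlMr //.
  rewrite (_ : s * (y - c) = y * s - omega); first by rewrite lerBlDr.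
  by rewrite /c; field; rewrite gt_eqF.
have hmxT : forall y, (y%:E <= lne beta * (s^-1)%:E + (omega / s)%:E)%E ->
    fine (maxe ((omega / (eta ^+ 2 * T) * expR (s * y))%:E
                 - theta%:E * v%:E * beta)%E 0%E) = 0.
  move=> y; rewrite hind; case: hbc => [[b hb]|hb]; rewrite hb; last first.
    by move=> _; rewrite gt0_muley ?lte_fin ?mulr_gt0 // addeNy maxNye.
  rewrite lee_fin harg -!EFinM -EFinB -EFin_max /= => h.
  apply/max_r; rewrite subr_le0.
  rewrite (_ : omega / (eta ^+ 2 * T) * expR (s * y) =
    theta * v * (omega / (theta * v * eta ^+ 2 * T) * expR (s * y))).
    by rewrite ler_wpM2l // mulr_ge0 // ltW.
  by field; rewrite !gt_eqF.
have hmxF : forall y, ~~ (y%:E <= lne beta * (s^-1)%:E + (omega / s)%:E)%E ->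
    exists b, [/\ beta = b%:E, u = - (v * b) &
    fine (maxe ((omega / (eta ^+ 2 * T) * expR (s * y))%:E
                 - theta%:E * v%:E * beta)%E 0%E) =
      omega / (eta ^+ 2 * T) * expR (s * y) - theta * v * b].
  move=> y; rewrite hind; case: hbc => [[b hb]|hb]; rewrite hb; last by rewrite leey.
  move=> h; exists b; split => //; first exact: hu.
  move: h; rewrite lee_fin harg -ltNge => h.
  rewrite -!EFinM -EFinB -EFin_max /=.
  apply/max_l; rewrite subr_ge0.
  rewrite (_ : omega / (eta ^+ 2 * T) * expR (s * y) =
    theta * v * (omega / (theta * v * eta ^+ 2 * T) * expR (s * y))).
    by rewrite ler_wpM2l ?mulr_ge0 ?ltW.
  by field; rewrite !gt_eqF.
have hTs : T = s ^+ 2 / eta ^+ 2 by rewrite s2; field; rewrite gt_eqF.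
have K2 : forall y, L * G y = F (y - c) * expR (c * y - c ^+ 2 / 2).
  move=> y; rewrite /G /F /phi /L -hind harg.
  case hA : (y%:E <= lne beta * (s^-1)%:E + (omega / s)%:E)%E.
    rewrite (hmxT y hA) /= mulr1 expR0 !mulr1 -!expRD; congr expR.
    by rewrite /c hTs; field; rewrite !gt_eqF.
  have [b [hb hu' hm]] := hmxF y (negbT hA).
  rewrite hm hu' /= !mulr0 expR0 !mul1r -!expRD; congr expR.
  by rewrite /c hTs; field; rewrite !gt_eqF.
have K3 : forall y, p (y - c) = p y * expR (c * y - c ^+ 2 / 2).
  move=> y; rewrite /p /normal_pdf oner_eq0 /normal_fun -mulrA -expRD.
  by congr (_ * expR _); rewrite expr1n; field.
have mF : measurable_fun setT F.
  rewrite /F; apply: measurableT_comp => //.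
  apply: measurable_funM.
    apply: measurable_funM => //.
    apply: measurableT_comp => //.
    apply: measurableT_comp => //.
  have mb : measurable_fun [set: bool] (fun b : bool => (b%:R : R)) by [].
  apply: (measurableT_comp mb).
  apply: measurable_fun_lee => //.
  apply/measurable_EFinP.
  by apply: measurableT_comp => //.
have mG : measurable_fun setT G.
  rewrite (_ : G = fun y => F (y - c) * expR (c * y - c ^+ 2 / 2) / L); last first.
    by apply/funext => y; rewrite -K2 mulrAC divff ?mul1r // gt_eqF.
  apply: measurable_funM => //.
  apply: measurable_funM.
    apply: (measurableT_comp mF).
    exact: measurable_funB.
  apply: measurableT_comp => //.
  exact: measurable_funB.
have F0 : forall x, (0 <= (F x)%:E)%E by move=> x; rewrite lee_fin expR_ge0.
have G0 : forall x, (0 <= (G x)%:E)%E.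
  by move=> x; rewrite lee_fin /G mulr_ge0 // ?expR_ge0 // /phi mulr_ge0 // expR_ge0.
have mFE : measurable_fun setT (fun x => (F x)%:E) by exact/measurable_EFinP.
have mGE : measurable_fun setT (fun x => (G x)%:E) by exact/measurable_EFinP.
have mp : measurable_fun setT (fun x => (p x)%:E).
  by apply/measurable_EFinP; exact: measurable_normal_pdf.
have p0 : forall x, (0 <= (p x)%:E)%E by move=> x; rewrite lee_fin normal_pdf_ge0.
transitivity (\int[P]_w (F (N w))%:E)%E; first by [].
have mN : measurable_fun [set: Omega] (N : Omega -> measurableTypeR R).
  exact: (@measurable_funP _ _ _ _ _ N).
transitivity (\int[pushforward P (N : Omega -> measurableTypeR R)]_y (F y)%:E)%E.
  by rewrite ge0_integral_pushforward // preimage_setT.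
transitivity (\int[normal_prob 0 1]_y (F y)%:E)%E.
  by apply: eq_measure_integral => A mA _; exact: hN.
transitivity (\int[lebesgue_measure]_y ((F y)%:E * (p y)%:E))%E.
  by apply: (@integral_normal01 R (fun y => (F y)%:E)) => //; exact: mFE.
transitivity (\int[lebesgue_measure]_y ((F (y - c))%:E * (p (y - c))%:E))%E.
  rewrite (ge0_integral_shift c (fun y => (F y)%:E * (p y)%:E)%E)//.
    exact: emeasurable_funM.
  by move=> x; rewrite mule_ge0.
transitivity (\int[lebesgue_measure]_y (L%:E * ((G y)%:E * (p y)%:E)))%E.
  apply: eq_integral => y _.
  by rewrite muleA -!EFinM K3 K2; congr EFin; ring.
rewrite ge0_integralZl//; last 3 first.
- exact: emeasurable_funM.
- by move=> x _; rewrite mule_ge0.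
- by rewrite lee_fin ltW.
congr (_ * _)%E.
have mGE' : measurable_fun [set: measurableTypeR R] (fun y => (G y)%:E) := mGE.
rewrite -(@integral_normal01 R (fun y => (G y)%:E) mGE')//.
transitivity (\int[pushforward P (N : Omega -> measurableTypeR R)]_y (G y)%:E)%E.
  by apply: eq_measure_integral => A mA _; symmetry; exact: hN.
by rewrite ge0_integral_pushforward // preimage_setT.
Qed.
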